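(* Let $f\colon A\to B$ be a continuous, open and surjective ring homomorphism of Huber rings. Let $T=\{t_{1},\dots,t_{n}\}\subset A$ be elements generating the unit ideal of $A$, and let $s\in A$. Then the induced map of Huber rings \[h\colon A\Big\langle\frac{t_{1},\dots,t_{n}}{s}\Big\rangle\to B\Big\langle\frac{f(t_{1}),\dots,f(t_{n})}{f(s)}\Big\rangle\] is open and surjective.
   Context: Standing assumption: Huber rings are Hausdorff, complete and Tate. For a Huber ring $A$ with pair of definition $(A_0,I)$, elements $t_1,\dots,t_n$ generating the unit ideal and $s\in A$, the rational localization $A\langle\frac{t_1,\dots,t_n}{s}\rangle$ is the completion of $A[1/s]$ equipped with the Huber ring topology for which $(A_0[\frac{t_1}{s},\dots,\frac{t_n}{s}], I\cdot A_0[\frac{t_1}{s},\dots,\frac{t_n}{s}])$ is a pair of definition. Equivalently it is the quotient of $A\langle X_1,\dots,X_n\rangle$ by the closure of the ideal $(t_1-sX_1,\dots,t_n-sX_n)$. *)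

(* Defs.v *)
From HB Require Import structures.
From mathcomp Require Import all_boot all_order all_algebra.
From mathcomp Require Import all_classical all_reals all_analysis.
Set Implicit Arguments. Unset Strict Implicit. Unset Printing Implicit Defensive.
Import Order.TTheory GRing.Theory Num.Theory.
Local Open Scope classical_set_scope.
Local Open Scope ring_scope.

(* A commutative ring whose carrier carries a topology (no compatibility yet;
   the topological-ring axioms are part of [is_huber] below). *)
HB.structure Definition TopComRing := {R of Topological R & GRing.ComNzRing R}.

Section Huber.
Variable R : TopComRing.type.

Definition is_topological_ring : Prop :=
  [/\ continuous (fun z : R * R => z.1 + z.2),
      continuous (fun x : R => - x) &
      continuous (fun z : R * R => z.1 * z.2)].

Definition is_subring (A0 : set R) : Prop :=
  [/\ A0 1, forall x y, A0 x -> A0 y -> A0 (x - y) &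
      forall x y, A0 x -> A0 y -> A0 (x * y)].

Definition gen_ideal (A0 : set R) (gens : seq R) : set R :=
  [set x | exists c : seq R, size c = size gens /\ all (fun a => a \in A0) c /\
       x = \sum_(i < size gens) c`_i * gens`_i].

Fixpoint ideal_pow (A0 P : set R) (k : nat) : set R :=
  match k with
  | 0 => A0
  | k'.+1 => [set x | exists l : seq (R * R),
       (forall p, p \in l -> ideal_pow A0 P k' p.1 /\ P p.2) /\
       x = \sum_(p <- l) p.1 * p.2]
  end.

Definition pair_of_definition (A0 : set R) (gens : seq R) : Prop :=
  [/\ is_subring A0, open A0, all (fun g => g \in A0) gens,
      (forall k, nbhs (0 : R) (ideal_pow A0 (gen_ideal A0 gens) k)) &
      (forall U, nbhs (0 : R) U ->
         exists k, ideal_pow A0 (gen_ideal A0 gens) k `<=` U)].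

Definition group_cauchy (F : set_system R) : Prop :=
  forall U, nbhs (0 : R) U -> exists2 V, F V & forall x y, V x -> V y -> U (x - y).

Definition group_complete : Prop :=
  forall F : set_system R, ProperFilter F -> group_cauchy F ->
    exists l : R, F --> l.

Definition is_tate : Prop :=
  exists w : R, (exists v : R, w * v = 1) /\ (fun k : nat => w ^+ k) @ \oo --> (0 : R).

(* Huber ring, with the standing assumptions: Hausdorff, complete, Tate *)
Definition is_huber : Prop :=
  [/\ is_topological_ring,
      exists A0 gens, pair_of_definition A0 gens,
      hausdorff_space R, group_complete & is_tate].

(* a series is a coefficient function on monomials (exponent vectors) *)
Definition monomial (n : nat) := 'I_n -> nat.

Definition restricted (n : nat) (g : monomial n -> R) : Prop :=
  forall U, nbhs (0 : R) U -> finite_set [set m | ~ U (g m)].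

(* m - e_i (only used when m i > 0) *)
Definition mono_dec (n : nat) (i : 'I_n) (m : monomial n) : monomial n :=
  fun j => if j == i then (m j).-1 else m j.

(* coefficients of g * (c - d X_i) *)
Definition mul_lin (n : nat) (g : monomial n -> R) (c d : R) (i : 'I_n)
  : monomial n -> R :=
  fun m => c * g m - d * (if (0 < m i)%N then g (mono_dec i m) else 0).

(* the ideal (t_1 - s X_1, ..., t_n - s X_n) of R<X> *)
Definition rat_ideal (n : nat) (t : 'I_n -> R) (s : R) : set (monomial n -> R) :=
  [set h | exists G : 'I_n -> monomial n -> R, (forall i, restricted (G i)) /\
     h = fun m => \sum_(i < n) mul_lin (G i) (t i) s i m].

(* topology of R<X>: neighbourhoods of 0 are {g | all coefficients in U},
   U a neighbourhood of 0 in R (= I^k A0<X> for a pair of definition) *)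
Definition ps_open (n : nat) (W : set (monomial n -> R)) : Prop :=
  W `<=` @restricted n /\
  forall g, W g -> exists2 U, nbhs (0 : R) U &
    forall g', restricted g' -> (forall m, U (g' m - g m)) -> W g'.

Definition ps_closure (n : nat) (J : set (monomial n -> R)) : set (monomial n -> R) :=
  [set g | restricted g /\ forall U, nbhs (0 : R) U ->
     exists2 h, J h & forall m, U (g m - h m)].

(* congruence modulo the closed ideal cl(J) defining
   R<t_1..t_n / s> = R<X> / cl(t_i - s X_i) *)
Definition rat_equiv (n : nat) (t : 'I_n -> R) (s : R) (g g' : monomial n -> R) : Prop :=
  ps_closure (rat_ideal t s) (fun m => g m - g' m).

(* open subsets of R<t/s> (quotient topology) correspond to open subsets of
   R<X> saturated for rat_equiv *)
Definition rat_saturated (n : nat) (t : 'I_n -> R) (s : R) (W : set (monomial n -> R)) :=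
  forall g g', W g -> restricted g' -> rat_equiv t s g' g -> W g'.

End Huber.

(* The map h : A<t/s> -> B<f(t)/f(s)> induced by g |-> f o g on R<X>. *)
Definition ratloc_map_surjective (A B : TopComRing.type) (f : A -> B)
  (n : nat) (t : 'I_n -> A) (s : A) : Prop :=
  forall g : monomial n -> B, restricted g ->
    exists2 u : monomial n -> A, restricted u &
      rat_equiv (fun i => f (t i)) (f s) g (fun m => f (u m)).

(* h is open: the image of every open set of A<t/s> (= saturated open W of
   A<X>) is open in B<f(t)/f(s)>, i.e. its preimage in B<X> is open. *)
Definition ratloc_map_open (A B : TopComRing.type) (f : A -> B)
  (n : nat) (t : 'I_n -> A) (s : A) : Prop :=
  forall W : set (monomial n -> A), ps_open W -> rat_saturated t s W ->
    ps_open [set g | restricted g /\ exists2 u, W u &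
                rat_equiv (fun i => f (t i)) (f s) g (fun m => f (u m))].

(* Main.v *)
Require Import Defs.
From HB Require Import structures.
From mathcomp Require Import all_boot all_order all_algebra.
From mathcomp Require Import all_classical all_reals all_analysis.
Import Order.TTheory GRing.Theory Num.Theory.
Local Open Scope classical_set_scope.
Local Open Scope ring_scope.

Lemma restricted0 (R : TopComRing.type) n : @restricted R n (fun _ => 0).
Proof.
move=> U U0; apply: (sub_finite_set _ (finite_set0 _)) => m /= nU.
by apply: nU; exact: nbhs_singleton U0.
Qed.

Lemma restrictedD (R : TopComRing.type) n (g h : monomial n -> R) :
  is_topological_ring R -> restricted g -> restricted h ->
  restricted (fun m => g m + h m).
Proof.
move=> [cadd _ _] rg rh U U0.
have U00 : nbhs ((0 : R) + 0) U by rewrite addr0.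
have := cadd (0, 0) U U00 => -[[P Q] /= [P0 Q0] PQ].
apply: (sub_finite_set (B := [set m | ~ P (g m)] `|` [set m | ~ Q (h m)])); last first.
  by rewrite finite_setU; split; [exact: rg | exact: rh].
move=> m /= nU.
have [Pg|nPg] := pselect (P (g m)); last by left.
have [Qh|nQh] := pselect (Q (h m)); last by right.
exfalso; apply: nU; exact: (PQ (g m, h m)).
Qed.

Lemma restrictedN (R : TopComRing.type) n (g : monomial n -> R) :
  is_topological_ring R -> restricted g -> restricted (fun m => - g m).
Proof.
move=> [_ copp _] rg U U0.
have U00 : nbhs (- (0 : R)) U by rewrite oppr0.
have P0 := copp 0 U U00.
apply: (sub_finite_set _ (rg _ P0)) => m /= nU; exact: nU.
Qed.

Lemma restrictedB (R : TopComRing.type) n (g h : monomial n -> R) :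
  is_topological_ring R -> restricted g -> restricted h ->
  restricted (fun m => g m - h m).
Proof.
move=> tR rg rh; apply: restrictedD => //; exact: restrictedN.
Qed.

Lemma image_nbhs0 (A B : TopComRing.type) (f : {rmorphism A -> B}) :
  (forall U : set A, open U -> open (f @` U)) ->
  forall N : set A, nbhs 0 N -> nbhs 0 (f @` N).
Proof.
move=> fo N; rewrite nbhsE; case=> O [oO O0] ON; rewrite nbhsE.
exists (f @` O).
  split; first exact: fo.
  by exists 0; rewrite ?rmorph0.
move=> y [x Ox <-]; exists x; [exact: ON | done].
Qed.

Lemma pre_nbhs0 (A B : TopComRing.type) (f : {rmorphism A -> B}) :
  continuous f -> forall V : set B, nbhs 0 V -> nbhs 0 (f @^-1` V).
Proof.
move=> fc V V0; have V0' : nbhs (f 0) V by rewrite rmorph0.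
exact: (fc 0 V V0').
Qed.

Arguments restricted0 {R n}.
Arguments restrictedD {R n g h}.
Arguments restrictedN {R n g}.
Arguments restrictedB {R n g h}.
Arguments image_nbhs0 {A B f} fo {N}.
Arguments pre_nbhs0 {A B f} fc {V}.

Fixpoint Qseq {A : TopComRing.type} (N : set A) (P : nat -> set A) k :=
  match k with 0 => N | k'.+1 => Qseq N P k' `&` P k' end.

Lemma liftP (A B : TopComRing.type) (f : {rmorphism A -> B}) n
  (P : nat -> set A) (N : set A) (g : monomial n -> B) :
  continuous f -> (forall U : set A, open U -> open (f @` U)) ->
  hausdorff_space B ->
  (forall k, nbhs 0 (P k)) -> (forall U, nbhs 0 U -> exists k, P k `<=` U) ->
  nbhs 0 N -> restricted g -> (forall m, (f @` N) (g m)) ->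
  exists2 u : monomial n -> A, restricted u &
    forall m, f (u m) = g m /\ N (u m).
Proof.
move=> fc fo hB hP hPb hN rg gN.
pose Q := Qseq N P.
have Qn k : nbhs 0 (Q k) by elim: k => //= k IH; apply: filterI.
have Qdec j k : (j <= k)%N -> Q k `<=` Q j.
  elim: k => [|k IH]; first by rewrite leqn0 => /eqP ->.
  rewrite leq_eqVlt => /orP [/eqP -> // | ].
  by rewrite ltnS => /IH H x [Qx _]; exact: H.
have key m : exists x, f x = g m /\ forall j, (f @` Q j) (g m) -> Q j x.
  have [all|] := pselect (forall j, (f @` Q j) (g m)).
  - have g0 : g m = 0.
      apply/esym/hB => U V U0 Vg; exists (g m); split; last exact: nbhs_singleton.
      have [k Pk] := hPb _ (pre_nbhs0 fc U0).
      have [x [_ Px] <-] := all k.+1; exact: Pk.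
    exists 0; split; first by rewrite rmorph0 g0.
    move=> j _; exact: nbhs_singleton (Qn j).
  - move=> /existsNP [j nj].
    have [k [Dk nDk]] : exists k, (f @` Q k) (g m) /\ ~ (f @` Q k.+1) (g m).
      apply: contrapT => H; apply: nj; elim: j => [|j IH]; first exact: gN.
      by apply: contrapT => nj; apply: H; exists j.
    case: Dk => x Qx fx; exists x; split => // i Di.
    have [ik|ki] := leqP i k; first exact: Qdec ik _ Qx.
    exfalso; apply: nDk; case: Di => y Qy fy; exists y; [exact: Qdec ki _ Qy | done].
have [u hu] := choice key.
exists u.
- move=> U U0; have [k Pk] := hPb U U0.
  apply: (sub_finite_set _ (rg _ (image_nbhs0 fo (Qn k.+1)))).
  move=> m /= nU D; apply: nU; apply: Pk; have := (hu m).2 _ D; by case.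
- move=> m; split; first exact: (hu m).1.
  exact: (hu m).2 0%N (gN m).
Qed.

Arguments liftP {A B f n P N g}.

Lemma closure0 (R : TopComRing.type) n (t : 'I_n -> R) (s : R) :
  ps_closure (rat_ideal t s) (fun _ => 0).
Proof.
split; first exact: restricted0.
move=> U U0; exists (fun _ => 0).
  exists (fun _ _ => 0); split; first by move=> i; exact: restricted0.
  apply/funext => m; rewrite big1 // => i _.
  by rewrite /mul_lin if_same !mulr0 subr0.
by move=> m; rewrite subr0; exact: nbhs_singleton.
Qed.

Theorem proposition2p12 (A B : TopComRing.type) (f : {rmorphism A -> B})
  (n : nat) (t : 'I_n -> A) (s : A) :
  is_huber A -> is_huber B ->
  continuous f ->
  (forall U : set A, open U -> open (f @` U)) ->
  (forall y : B, exists x : A, f x = y) ->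
  (exists a : 'I_n -> A, \sum_(i < n) a i * t i = 1) ->
  ratloc_map_open f t s /\ ratloc_map_surjective f t s.
Proof.
move=> hA hB fc fo fs _.
case: hA => tA [A0 [gens [_ _ _ hP hPb]]] _ _ _.
case: hB => tB _ hsB _ _.
split.
- move=> W [Wr Wo] Ws; split; first by move=> g [].
  move=> g [rg [u Wu eq]]; have [U U0 hU] := Wo u Wu.
  exists (f @` U); first exact: image_nbhs0.
  move=> g' rg' hg'; split => //.
  have rd : restricted (fun m => g' m - g m) by exact: restrictedB.
  have [d rdd hd] := liftP fc fo hsB hP hPb U0 rd hg'.
  exists (fun m => u m + d m).
    apply: hU; first exact: restrictedD tA (Wr u Wu) rdd.
    by move=> m; rewrite addrAC subrr add0r; exact: (hd m).2.
  rewrite /rat_equiv; set Z := (X in ps_closure _ X); have -> : Z = (fun m => g m - f (u m)).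
    rewrite /Z; apply/funext => m; rewrite rmorphD (hd m).1.
    rewrite opprD opprB.
    by rewrite addrCA [g' m + _]addrCA subrr addr0 addrC.
  exact: eq.
- move=> g rg.
  have gN : forall m, (f @` setT) (g m).
    by move=> m; have [x fx] := fs (g m); exists x.
  have [u ru hu] := liftP fc fo hsB hP hPb (filterT : nbhs (0 : A) setT) rg gN.
  exists u => //.
  rewrite /rat_equiv.
  have -> : (fun m => g m - f (u m)) = (fun _ => 0).
    by apply/funext => m; rewrite (hu m).1 subrr.
  exact: closure0.
Qed.
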